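(* Let $G=(V,E)$ be a simple undirected graph on $n$ nodes, let $0<\epsilon<\frac13$ and $\delta>0$, and let $D\subseteq V$ be an $\epsilon^3$-near clique with $|D|\ge\delta n$. Let $C=K_{\epsilon^2}(D)\cap D$. Then $|C|\ge(1-\epsilon)|D|-\frac{1}{\epsilon^2}$.
   Context: $\Gamma(v)$ denotes the set of neighbors of $v$. For $Y\subseteq V$ and $0\le\eta\le1$: $K_\eta(Y)=\{v\in V: |\Gamma(v)\cap Y|\ge(1-\eta)|Y|\}$. Each undirected edge $\{u,v\}$ is counted as two directed edges; a set $D\subseteq V$ is a $\gamma$-near clique if $|\{(u,v)\in D\times D:\{u,v\}\in E\}|\ge(1-\gamma)|D|(|D|-1)$. *)

(* Defs.v *)
From HB Require Import structures.
From mathcomp Require Import all_boot all_order all_algebra.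
Set Implicit Arguments. Unset Strict Implicit. Unset Printing Implicit Defensive.
Import Order.TTheory GRing.Theory Num.Theory.
Local Open Scope ring_scope.

Definition simple_graph (V : finType) (e : rel V) : Prop :=
  symmetric e /\ irreflexive e.

Definition nbhd (V : finType) (e : rel V) (v : V) : {set V} := [set u | e v u].

Definition Kset (R : realFieldType) (V : finType) (e : rel V) (eta : R)
  (Y : {set V}) : {set V} :=
  [set v | (1 - eta) * #|Y|%:R <= #|nbhd e v :&: Y|%:R].

Definition dir_edges (V : finType) (e : rel V) (D : {set V}) : nat :=
  #|[set p : V * V | (p.1 \in D) && (p.2 \in D) && e p.1 p.2]|.

Definition near_clique (R : realFieldType) (V : finType) (e : rel V)
  (gamma : R) (D : {set V}) : Prop :=
  (1 - gamma) * #|D|%:R * (#|D|%:R - 1) <= (dir_edges e D)%:R.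

(* Main.v *)
Require Import Defs.
From HB Require Import structures.
From mathcomp Require Import all_boot all_order all_algebra.
From mathcomp Require Import ring lra zify.
Import Order.TTheory GRing.Theory Num.Theory.
Local Open Scope ring_scope.

Lemma dir_edges_sum (V : finType) (e : rel V) (D : {set V}) :
  dir_edges e D = (\sum_(v in D) #|nbhd e v :&: D|)%N.
Proof.
rewrite /dir_edges.
under eq_bigr => v _ do rewrite -sum1_card.
rewrite pair_big_dep /= sum1_card; apply: eq_card => -[u w].
rewrite [in LHS]inE /= /nbhd. rewrite [in RHS]unfold_in /= !inE. by case: (u \in D); case: (w \in D); case: (e u w).
Qed.

Lemma deg_le (V : finType) (e : rel V) (D : {set V}) v :
  irreflexive e -> v \in D -> (#|nbhd e v :&: D| <= #|D| - 1)%N.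
Proof.
move=> irr vD; rewrite (cardsD1 v D) vD add1n subn1 /=.
apply: subset_leq_card; apply/subsetP => u; rewrite !inE /nbhd.
move=> /andP[euv ->]; rewrite andbT; apply/eqP => uv; by rewrite uv irr in euv.
Qed.

Lemma arith (R : realFieldType) (eps k x b c : R) :
  0 < eps -> eps < 3^-1 -> k = eps^+2 -> 0 <= b -> 0 <= c -> b + c = x ->
  b * (k * x - 1) <= eps^+3 * x ^+ 2 ->
  (1 - eps) * x - k^-1 <= c.
Proof.
move=> e0 e3 -> b0 c0 bcx H.
have k0 : 0 < eps^+2 by rewrite exprn_gt0.
case: (lerP ((1 - eps) * x) ((eps^+2)^-1)) => hx.
  have : 0 <= c by []. 
  have: (1 - eps) * x - (eps ^+ 2)^-1 <= 0 by rewrite subr_le0.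
  lra.
set m := (eps^+2)^-1 in hx *.
have km : eps^+2 * m = 1 by rewrite mulfV // lt0r_neq0.
have hx' : 1 <= eps^+2 * ((1 - eps) * x) by nra.
rewrite lerBlDr -lerBlDl.
suff : b <= eps * x + m by lra.
rewrite leNgt; apply/negP => hb.
have x0 : 0 <= x by nra.
have p : 0 < eps^+2 * x - 1 by nra.
have : (eps * x + m) * (eps ^+ 2 * x - 1) < b * (eps ^+ 2 * x - 1) by rewrite ltr_pM2r //; lra.
have : eps^+3 * x^+2 <= (eps * x + m) * (eps ^+ 2 * x - 1).
  rewrite mulrDl mulrBr mulrBr [m * _]mulrA [m * _]mulrC km. nra.
lra.
Qed.

Theorem lemma5p4 (R : realFieldType) (V : finType) (e : rel V)
  (eps delta : R) (D : {set V}) :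
  simple_graph e ->
  0 < eps -> eps < 3^-1 -> 0 < delta ->
  near_clique e (eps ^+ 3) D ->
  delta * #|V|%:R <= #|D|%:R ->
  (1 - eps) * #|D|%:R - (eps ^+ 2)^-1 <= #|Kset e (eps ^+ 2) D :&: D|%:R.
Proof.
move=> [_ irr] e0 e3 _ nc _.
set K := Kset e (eps ^+ 2) D.
set d := #|D|%:R.
have bcx : #|D :\: K|%:R + #|K :&: D|%:R = d :> R.
  by rewrite -natrD addnC setIC cardsID.
have hE := nc; rewrite /near_clique dir_edges_sum natr_sum (@big_setID _ _ _ _ D K) /= in hE.
have h1 : \sum_(i in D :&: K) (#|nbhd e i :&: D|%:R : R) <= #|K :&: D|%:R * (d - 1).
  rewrite setIC mulr_natl -sumr_const; apply: ler_sum => v.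
  rewrite inE => /andP[_ vD]; rewrite lerBrDr /d -(natrD _ _ 1) ler_nat.
  have := @deg_le _ _ _ _ irr vD; have : (0 < #|D|)%N by apply/card_gt0P; exists v.
  lia.
have h2 : \sum_(i in D :\: K) (#|nbhd e i :&: D|%:R : R) <= #|D :\: K|%:R * ((1 - eps^+2) * d).
  rewrite mulr_natl -sumr_const; apply: ler_sum => v.
  rewrite !inE => /andP[vK _]; rewrite ltW // ltNge; exact: vK.
have d0 : 0 <= d by rewrite /d ler0n.
apply: (@arith R eps (eps^+2) d _ _ e0 e3 erefl (ler0n _ _) (ler0n _ _) bcx).
rewrite -bcx in hE h1 h2 d0 *.
set b := #|D :\: K|%:R in hE h1 h2 d0 bcx *.
set c := #|K :&: D|%:R in hE h1 h2 d0 bcx *.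
have b0 : 0 <= b by rewrite ler0n.
have c0 : 0 <= c by rewrite ler0n.
have ee : 0 <= eps^+3 by rewrite exprn_ge0 // ltW.
nra.
Qed.
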